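(* Let $E$, $(s^1,s^0)$, $M$ be as in the context. (a) For every $z\in Z^2_{\mathrm{pt}}(E,M)$: $z^{\mathrm{std}}_M([m])=0$ and $z^{\mathrm{std}}_G(g[\bar g]^{-1},[\bar g])=0$ for all $m\in M_E$, $g\in G_E$. (b) $Z^2_{\mathrm{st}}(E,M)=\{z\in Z^2_{\mathrm{pt}}(E,M): z_M([m])=0\text{ and }z_G(g[\bar g]^{-1},[\bar g])=0\ \forall m\in M_E,g\in G_E\}$; in particular $z^{\mathrm{std}}$ is standard for every $z\in Z^2_{\mathrm{pt}}(E,M)$. (c) The inclusion $Z^2_{\mathrm{st}}(E,M)\to Z^2_{\mathrm{pt}}(E,M)$ and the map $z\mapsto z^{\mathrm{std}}$ induce mutually inverse isomorphisms between $H^2_{\mathrm{st}}(E,M)$ and $H^2_{\mathrm{pt}}(E,M)$; in particular $H^2(E,M)\cong H^2_{\mathrm{st}}(E,M)$.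
   Context: Let $\Pi_0$ be a group, $\Pi_1$ an abelian $\Pi_0$-module (multiplicative), $M$ an abelian $\Pi_0$-module. A crossed module extension $E$ of $\Pi_0$ with $\Pi_1$: crossed module $(G_E,M_E,\mu)$ (left action ${}^gm$, $\mu({}^gm)=g\mu(m)g^{-1}$, ${}^{\mu(n)}m=nmn^{-1}$) with monomorphism $\iota:\Pi_1\to M_E$ and epimorphism $\pi:G_E\to\Pi_0$, $\Pi_1\to M_E\to G_E\to\Pi_0$ exact, ${}^g\iota(k)=\iota(\pi(g)k)$. $\bar g:=\pi(g)$; $M$ is a $G_E$-module via $\pi$. A section system: $s^0:\Pi_0\to G_E$, $s^0(1)=1$, $\pi s^0=\mathrm{id}$; $s^1:\mu(M_E)\to M_E$, $s^1(1)=1$, $\mu s^1=\mathrm{id}$. Notation $[p]=s^0(p)$, $[x]=s^1(x)$ for $x\in\mu(M_E)$, $[m]=s^1(\mu(m))$ for $m\in M_E$. Cochains: $C^1(E,M)=\mathrm{Map}(G_E,M)$, $C^2(E,M)=\mathrm{Map}(M_E\times G_E\times G_E,M)$; $d$ on $C^1$: $(dc)(m,h,g)=c(\mu(m)h)-c(hg)+\bar h c(g)$; on $C^2$: $(dc)(p,n,k,m,h,g)=c(p,\mu(n)k,\mu(m)h)-c(pn,k,hg)+c(n\,{}^km,kh,g)-\bar k\cdot c(m,h,g)$; $H^2(E,M)$ is the resulting cohomology. Pointed: $c(1)=0$, resp. $c(1,1,1)=0$; $Z^2_{\mathrm{pt}}$, $B^2_{\mathrm{pt}}$ the pointed cocycles/coboundaries,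 $H^2_{\mathrm{pt}}=Z^2_{\mathrm{pt}}/B^2_{\mathrm{pt}}$. $c_M(m)=c(m,1,1)$, $c_G(h,g)=c(1,h,g)$, and for $m\in M_E$, $c_G(m,h):=c_G(\mu(m),h)$. For $z\in Z^2_{\mathrm{pt}}(E,M)$: $\sigma_z(g)=z([g[\bar g]^{-1}],[\bar g],1)$, $z^{\mathrm{std}}=z-d\sigma_z$; $z$ is standard if $z^{\mathrm{std}}=z$. $Z^2_{\mathrm{st}}(E,M)$ = standard pointed cocycles, $B^2_{\mathrm{st}}(E,M)=\{b\in B^2_{\mathrm{pt}}(E,M):b^{\mathrm{std}}=b\}$, $H^2_{\mathrm{st}}=Z^2_{\mathrm{st}}/B^2_{\mathrm{st}}$. *)

(* Defs.v *)
(* abstract (possibly infinite) groups are given as explicit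
   records with their axioms; the coefficient module M is a zmodType. *)
From HB Require Import structures.
From mathcomp Require Import all_boot all_algebra.
Set Implicit Arguments. Unset Strict Implicit. Unset Printing Implicit Defensive.
Import GRing.Theory.
Local Open Scope ring_scope.

Record group := Group {
  gcar :> Type;
  gmul : gcar -> gcar -> gcar;
  gone : gcar;
  ginv : gcar -> gcar;
  gmulA : forall x y z, gmul x (gmul y z) = gmul (gmul x y) z;
  gmul1g : forall x, gmul gone x = x;
  gmulg1 : forall x, gmul x gone = x;
  gmulVg : forall x, gmul (ginv x) x = gone;
  gmulgV : forall x, gmul x (ginv x) = gone
}.
Arguments gone {g}.

Definition is_hom (A B : group) (f : A -> B) :=
  forall x y, f (gmul x y) = gmul (f x) (f y).

Record pimod (P0 : group) := PiMod {
  P1 : group;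
  P1_comm : forall x y : P1, gmul x y = gmul y x;
  P1act : P0 -> P1 -> P1;
  P1act1 : forall k, P1act gone k = k;
  P1actM : forall p q k, P1act (gmul p q) k = P1act p (P1act q k);
  P1actmul : forall p k l, P1act p (gmul k l) = gmul (P1act p k) (P1act p l)
}.

(* A crossed module extension E of Pi0 with Pi1:
   Pi1 --iota--> M_E --mu--> G_E --pi--> Pi0, exact, iota mono, pi epi. *)
Record xext (P0 : group) (Pi : pimod P0) := XExt {
  GE : group;
  ME : group;
  xact : GE -> ME -> ME;
  mu : ME -> GE;
  iota : P1 Pi -> ME;
  epi : GE -> P0;
  xact1 : forall m, xact gone m = m;
  xactM : forall g h m, xact (gmul g h) m = xact g (xact h m);
  xactmul : forall g m n, xact g (gmul m n) = gmul (xact g m) (xact g n);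
  mu_hom : is_hom mu;
  mu_xact : forall g m, mu (xact g m) = gmul (gmul g (mu m)) (ginv g);
  peiffer : forall n m, xact (mu n) m = gmul (gmul n m) (ginv n);
  iota_hom : is_hom iota;
  pi_hom : is_hom epi;
  iota_inj : forall k l, iota k = iota l -> k = l;
  pi_surj : forall p, exists g, epi g = p;
  exact_ME : forall m, mu m = gone <-> exists k, m = iota k;
  exact_GE : forall g, epi g = gone <-> exists m, g = mu m;
  xact_iota : forall g k, xact g (iota k) = iota (@P1act P0 Pi (epi g) k)
}.

Arguments xact {P0 Pi} x _ _.
Arguments mu {P0 Pi} x _.
Arguments iota {P0 Pi} x _.
Arguments epi {P0 Pi} x _.

Definition is_modact (P0 : group) (V : zmodType) (act : P0 -> V -> V) :=
  [/\ forall v, act gone v = v,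
      forall p q v, act (gmul p q) v = act p (act q v)
    & forall p v w, act p (v + w) = act p v + act p w].

(* Section system: s0 : Pi0 -> G_E, s1 : mu(M_E) -> M_E.  s1 is encoded as a
   total function G_E -> M_E whose values outside mu(M_E) are irrelevant. *)
Record sections P0 (Pi : pimod P0) (E : xext Pi) := Sections {
  s0 : P0 -> GE E;
  s1 : GE E -> ME E;
  s0_1 : s0 gone = gone;
  pi_s0 : forall p, epi E (s0 p) = p;
  s1_1 : s1 gone = gone;
  mu_s1 : forall m, mu E (s1 (mu E m)) = mu E m
}.

Arguments s0 {P0 Pi E} s _.
Arguments s1 {P0 Pi E} s _.

Section Cochains.
Variables (P0 : group) (Pi : pimod P0) (E : xext Pi)
          (V : zmodType) (act : P0 -> V -> V).

Definition C1 := GE E -> V.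
Definition C2 := ME E -> GE E -> GE E -> V.

Definition d1 (c : C1) : C2 := fun m h g =>
  c (gmul (mu E m) h) - c (gmul h g) + act (epi E h) (c g).

Definition d2 (c : C2) :
  ME E -> ME E -> GE E -> ME E -> GE E -> GE E -> V :=
  fun p n k m h g =>
    c p (gmul (mu E n) k) (gmul (mu E m) h) - c (gmul p n) k (gmul h g)
    + c (gmul n (xact E k m)) (gmul k h) g - act (epi E k) (c m h g).

Definition Z2 (c : C2) := forall p n k m h g, d2 c p n k m h g = 0.
Definition B2 (c : C2) := exists c1 : C1, forall m h g, c m h g = d1 c1 m h g.
Definition pointed1 (c : C1) := c gone = 0.
Definition pointed2 (c : C2) := c gone gone gone = 0.
Definition Z2pt (c : C2) := Z2 c /\ pointed2 c.
Definition B2pt (c : C2) :=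
  exists c1 : C1, pointed1 c1 /\ forall m h g, c m h g = d1 c1 m h g.

Variable S : sections E.

Definition gcorr (g : GE E) : GE E := gmul g (ginv (s0 S (epi E g))).

Definition sigma (z : C2) : C1 := fun g =>
  z (s1 S (gcorr g)) (s0 S (epi E g)) gone.

Definition std (z : C2) : C2 := fun m h g => z m h g - d1 (sigma z) m h g.

Definition standard (z : C2) := forall m h g, std z m h g = z m h g.
Definition Z2st (z : C2) := Z2pt z /\ standard z.
Definition B2st (b : C2) := B2pt b /\ standard b.

Definition addC2 (z z' : C2) : C2 := fun m h g => z m h g + z' m h g.
Definition subC2 (z z' : C2) : C2 := fun m h g => z m h g - z' m h g.

End Cochains.

(* Main.v *)
Require Import Defs.
From HB Require Import structures.
From mathcomp Require Import all_boot all_algebra.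
Import GRing.Theory.
Local Open Scope ring_scope.

Ltac canc t := rewrite ?(addrAC _ t) ?(addrAC _ (-t)) addrK.
Ltac zprep := apply/eqP; rewrite -subr_eq0; apply/eqP;
  rewrite -[LHS]add0r ?opprD ?opprK ?addrA.

Lemma zid1 (V : zmodType) (A B D K1 K2 K3 : V) :
  (A - B + K1) - (A - D + K2) + (B - D + K3) - (K1 - K2 + K3) = 0.
Proof.
rewrite -[LHS]add0r !opprD !opprK !addrA.
canc A. canc B. canc D. canc K1. canc K2. canc K3. done.
Qed.

Lemma zid2 (V : zmodType) (a a' b b' c c' e e' : V) :
  (a - a') - (b - b') + (c - c') - (e - e') = (a - b + c - e) - (a' - b' + c' - e').
Proof. zprep. canc a. canc a'. canc b. canc b'. canc c. canc c'. canc e. canc e'. done. Qed.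

Lemma zid3 (V : zmodType) (a a' b b' e e' : V) :
  (a - a') - (b - b') + (e - e') = (a - b + e) - (a' - b' + e').
Proof. zprep. canc a. canc a'. canc b. canc b'. canc e. canc e'. done. Qed.

Lemma zid6 (V : zmodType) (a a' b b' e e' : V) :
  (a + a') - (b + b') + (e + e') = (a - b + e) + (a' - b' + e').
Proof. zprep. canc a. canc a'. canc b. canc b'. canc e. canc e'. done. Qed.

Lemma zid4 (V : zmodType) (a a' d d' : V) :
  (a + a') - (d + d') = (a - d) + (a' - d').
Proof. zprep. canc a. canc a'. canc d. canc d'. done. Qed.

Lemma zid5 (V : zmodType) (a b e : V) : - a - - b + - e = - (a - b + e).
Proof. zprep. canc a. canc b. canc e. done. Qed.

Lemma ginv1 (G : group) : ginv (@gone G) = gone.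
Proof. by rewrite -[LHS]gmulg1 gmulVg. Qed.

Lemma hom1 {A B : group} {f : A -> B} : is_hom f -> f gone = gone.
Proof.
move=> H; have h := H gone gone; rewrite gmul1g in h.
transitivity (gmul (gmul (ginv (f gone)) (f gone)) (f gone)).
  by rewrite gmulVg gmul1g.
by rewrite -gmulA -h gmulVg.
Qed.

Lemma homV {A B : group} {f : A -> B} x : is_hom f -> f (ginv x) = ginv (f x).
Proof.
move=> H.
transitivity (gmul (f (ginv x)) (gmul (f x) (ginv (f x)))).
  by rewrite gmulgV gmulg1.
by rewrite gmulA -H gmulVg (hom1 H) gmul1g.
Qed.

Lemma mu1 {P0} {Pi : pimod P0} {E : xext Pi} : mu E gone = gone.
Proof. exact: hom1 (@mu_hom _ _ E). Qed.

Lemma epi1 {P0} {Pi : pimod P0} {E : xext Pi} : epi E gone = gone.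
Proof. exact: hom1 (@pi_hom _ _ E). Qed.

Lemma xact_one {P0} {Pi : pimod P0} {E : xext Pi} k : xact E k gone = gone.
Proof. exact: (hom1 (f:=xact E k) (@xactmul _ _ E k)). Qed.

Lemma epi_mu {P0} {Pi : pimod P0} {E : xext Pi} m : epi E (mu E m) = gone.
Proof. by apply/exact_GE; exists m. Qed.

Lemma epi_gcorr {P0} {Pi : pimod P0} {E : xext Pi} (S : sections E) g :
  epi E (gcorr S g) = gone.
Proof. by rewrite /gcorr pi_hom (homV _ (@pi_hom _ _ E)) pi_s0 gmulgV. Qed.

Lemma mu_s1_gcorr {P0} {Pi : pimod P0} {E : xext Pi} (S : sections E) g :
  mu E (s1 S (gcorr S g)) = gcorr S g.
Proof. have [n ->] := proj1 (exact_GE _) (epi_gcorr S g); exact: mu_s1. Qed.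

Lemma act0 {P0 : group} {V : zmodType} {act : P0 -> V -> V} p : is_modact act -> act p 0 = 0.
Proof. case=> _ _ aD; apply/(addrI (act p 0)); by rewrite -aD !addr0. Qed.

Lemma actN {P0 : group} {V : zmodType} {act : P0 -> V -> V} p v : is_modact act ->
  act p (- v) = - act p v.
Proof.
move=> Hact; have [_ _ aD] := Hact.
apply/(addrI (act p v)); by rewrite -aD !subrr act0.
Qed.

Lemma actB {P0 : group} {V : zmodType} {act : P0 -> V -> V} p v w : is_modact act ->
  act p (v - w) = act p v - act p w.
Proof. move=> Hact; have [_ _ aD] := Hact; by rewrite aD actN. Qed.

Lemma zid7 (V : zmodType) (a b c d : V) : a - b + c - d = 0 -> c = d + b - a.
Proof. move=> h; apply/eqP; rewrite -subr_eq0 -h; apply/eqP. zprep.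
canc a. canc b. canc c. canc d. done. Qed.

Lemma zid8 (V : zmodType) (a b c : V) : a - (b - (c + b - a) + c) = 0.
Proof. rewrite -[LHS]add0r ?opprD ?opprK ?addrA. canc a. canc b. canc c. done. Qed.

Lemma zid9 (V : zmodType) (a b c : V) : a - ((a - b) - c) = b + c.
Proof. zprep. canc a. canc b. canc c. done. Qed.

Lemma d2d1 {P0 : group} {Pi : pimod P0} {E : xext Pi} {V : zmodType}
  {act : P0 -> V -> V} (Hact : is_modact act) (c : C1 E V) p n k m h g :
  d2 act (d1 act c) p n k m h g = 0.
Proof.
have [_ aM aD] := Hact.
rewrite /d2 /d1.
have e1 : gmul (mu E (gmul p n)) k = gmul (mu E p) (gmul (mu E n) k)
  by rewrite (@mu_hom _ _ E) gmulA.
have e2 : gmul (mu E (gmul n (xact E k m))) (gmul k h)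
          = gmul (gmul (mu E n) k) (gmul (mu E m) h).
  by rewrite (@mu_hom _ _ E) mu_xact -!gmulA (gmulA (ginv k)) gmulVg gmul1g.
have e4 : epi E (gmul (mu E n) k) = epi E k
  by rewrite (@pi_hom _ _ E) epi_mu gmul1g.
rewrite e1 e2 e4 (@pi_hom _ _ E) aM aD (actB _ _ _ Hact) (gmulA k h g).
exact: zid1.
Qed.

Lemma d2_sub {P0 : group} {Pi : pimod P0} {E : xext Pi} {V : zmodType}
  {act : P0 -> V -> V} (Hact : is_modact act) (z w : C2 E V) p n k m h g :
  d2 act (fun m h g => z m h g - w m h g) p n k m h g
  = d2 act z p n k m h g - d2 act w p n k m h g.
Proof. rewrite /d2 /= (actB _ _ _ Hact); exact: zid2. Qed.

Lemma F1 {P0 : group} {Pi : pimod P0} {E : xext Pi} {V : zmodType}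
  {act : P0 -> V -> V} (Hact : is_modact act) (z : C2 E V) (Hz : Z2 act z) n' s :
  z n' gone s = z n' gone gone.
Proof.
have [a1 _ _] := Hact. have h := Hz n' gone gone gone gone s.
rewrite /d2 ?mu1 ?epi1 ?xact1 ?gmul1g ?gmulg1 ?a1 addrK in h.
by apply/esym/eqP; rewrite -subr_eq0 h.
Qed.

Lemma F2 {P0 : group} {Pi : pimod P0} {E : xext Pi} {V : zmodType}
  {act : P0 -> V -> V} (Hact : is_modact act) (z : C2 E V) (Hz : Z2 act z) n' s :
  z gone (mu E n') s - z n' gone s + z n' s gone - z gone s gone = 0.
Proof.
have [a1 _ _] := Hact. have h := Hz gone n' gone gone s gone.
rewrite /d2 ?mu1 ?epi1 ?xact1 ?gmul1g ?gmulg1 ?a1 in h. exact h.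
Qed.

Lemma F3 {P0 : group} {Pi : pimod P0} {E : xext Pi} {V : zmodType}
  {act : P0 -> V -> V} (Hact : is_modact act) (z : C2 E V) (Hz : Z2 act z)
  (Hp : z gone gone gone = 0) k : z gone k gone = 0.
Proof.
have [a1 _ _] := Hact. have h := Hz gone gone k gone gone gone.
rewrite /d2 ?mu1 ?epi1 ?xact1 ?xact_one ?gmul1g ?gmulg1 ?a1 Hp (act0 _ Hact) in h.
by rewrite subrr add0r subr0 in h.
Qed.

Lemma sig_epi1 {P0 : group} {Pi : pimod P0} {E : xext Pi} {V : zmodType}
  (S : sections E) (z : C2 E V) x : epi E x = gone ->
  sigma S z x = z (s1 S x) gone gone.
Proof. move=> hx; by rewrite /sigma /gcorr hx s0_1 ginv1 gmulg1. Qed.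

Lemma sig_s0 {P0 : group} {Pi : pimod P0} {E : xext Pi} {V : zmodType}
  (S : sections E) (z : C2 E V) p : sigma S z (s0 S p) = z gone (s0 S p) gone.
Proof. by rewrite /sigma /gcorr pi_s0 gmulgV s1_1. Qed.

Lemma sig_formula {P0 : group} {Pi : pimod P0} {E : xext Pi} {V : zmodType}
  {act : P0 -> V -> V} (Hact : is_modact act) (S : sections E) (z : C2 E V)
  (Hz : Z2 act z) g :
  sigma S z g = z gone (s0 S (epi E g)) gone + z (s1 S (gcorr S g)) gone gone
                - z gone (gcorr S g) (s0 S (epi E g)).
Proof.
have h := F2 Hact z Hz (s1 S (gcorr S g)) (s0 S (epi E g)).
rewrite mu_s1_gcorr (F1 Hact z Hz) in h.
rewrite /sigma; exact: zid7 h.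
Qed.

Lemma partA1 {P0 : group} {Pi : pimod P0} {E : xext Pi} {V : zmodType}
  {act : P0 -> V -> V} (Hact : is_modact act) (S : sections E) (z : C2 E V) m :
  std act S z (s1 S (mu E m)) gone gone = 0.
Proof.
have [a1 _ _] := Hact.
rewrite /std /d1 mu_s1 gmulg1 gmul1g epi1 a1 (sig_epi1 S z (mu E m) (epi_mu m)).
by rewrite subrK subrr.
Qed.

Lemma partA2 {P0 : group} {Pi : pimod P0} {E : xext Pi} {V : zmodType}
  {act : P0 -> V -> V} (Hact : is_modact act) (S : sections E) (z : C2 E V)
  (Hz : Z2 act z) g :
  std act S z gone (gcorr S g) (s0 S (epi E g)) = 0.
Proof.
have [a1 _ _] := Hact.
rewrite /std /d1 mu1 gmul1g (epi_gcorr S g) a1.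
have -> : gmul (gcorr S g) (s0 S (epi E g)) = g
  by rewrite /gcorr -gmulA gmulVg gmulg1.
rewrite (sig_epi1 S z _ (epi_gcorr S g)) sig_s0 (sig_formula Hact S z Hz g).
exact: zid8.
Qed.

Lemma std_of {P0 : group} {Pi : pimod P0} {E : xext Pi} {V : zmodType}
  {act : P0 -> V -> V} (Hact : is_modact act) (S : sections E) (z : C2 E V)
  (Hz : Z2 act z) (Hp : z gone gone gone = 0)
  (HM : forall m, z (s1 S (mu E m)) gone gone = 0)
  (HG : forall g, z gone (gcorr S g) (s0 S (epi E g)) = 0) : standard act S z.
Proof.
have Hs : forall g, sigma S z g = 0.
  move=> g; rewrite (sig_formula Hact S z Hz g) HG (F3 Hact z Hz Hp).
  have [n hn] := proj1 (exact_GE _) (epi_gcorr S g).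
  by rewrite hn HM subr0 add0r.
move=> m h g; by rewrite /std /d1 !Hs (act0 _ Hact) subrr add0r subr0.
Qed.

Lemma Z2_std {P0 : group} {Pi : pimod P0} {E : xext Pi} {V : zmodType}
  {act : P0 -> V -> V} (Hact : is_modact act) (S : sections E) (z : C2 E V)
  (Hz : Z2 act z) : Z2 act (std act S z).
Proof.
move=> p n k m h g.
have := d2_sub Hact z (d1 act (sigma S z)) p n k m h g.
rewrite (Hz p n k m h g) (d2d1 Hact) subrr; exact.
Qed.

Lemma pt_std {P0 : group} {Pi : pimod P0} {E : xext Pi} {V : zmodType}
  {act : P0 -> V -> V} (Hact : is_modact act) (S : sections E) (z : C2 E V)
  (Hp : z gone gone gone = 0) : std act S z gone gone gone = 0.
Proof.
have [a1 _ _] := Hact.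
rewrite /std /d1 mu1 !gmul1g epi1 a1 (sig_epi1 S z _ epi1) s1_1 Hp.
by rewrite ?subrr ?add0r ?subr0 ?oppr0.
Qed.

Lemma Z2st_std {P0 : group} {Pi : pimod P0} {E : xext Pi} {V : zmodType}
  {act : P0 -> V -> V} (Hact : is_modact act) (S : sections E) (z : C2 E V)
  (Hz : Z2 act z) (Hp : z gone gone gone = 0) : Z2st act S (std act S z).
Proof.
split; first split.
- exact: Z2_std.
- exact: pt_std.
apply: std_of => //.
- exact: Z2_std.
- exact: pt_std.
- move=> m; exact: partA1.
- move=> g; apply: partA2 => //; exact: Z2_std.
Qed.

Lemma d1_sub {P0 : group} {Pi : pimod P0} {E : xext Pi} {V : zmodType}
  {act : P0 -> V -> V} (Hact : is_modact act) (c c' : C1 E V) m h g :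
  d1 act (fun x => c x - c' x) m h g = d1 act c m h g - d1 act c' m h g.
Proof. rewrite /d1 /= (actB _ _ _ Hact); exact: zid3. Qed.

Lemma d1_add {P0 : group} {Pi : pimod P0} {E : xext Pi} {V : zmodType}
  {act : P0 -> V -> V} (Hact : is_modact act) (c c' : C1 E V) m h g :
  d1 act (fun x => c x + c' x) m h g = d1 act c m h g + d1 act c' m h g.
Proof. have [_ _ aD] := Hact. rewrite /d1 /= aD; exact: zid6. Qed.

Lemma d1_opp {P0 : group} {Pi : pimod P0} {E : xext Pi} {V : zmodType}
  {act : P0 -> V -> V} (Hact : is_modact act) (c : C1 E V) m h g :
  d1 act (fun x => - c x) m h g = - d1 act c m h g.
Proof. rewrite /d1 /= (actN _ _ Hact); exact: zid5. Qed.

Lemma d1_111 {P0 : group} {Pi : pimod P0} {E : xext Pi} {V : zmodType}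
  {act : P0 -> V -> V} (Hact : is_modact act) (c : C1 E V) :
  d1 act c gone gone gone = c gone.
Proof. have [a1 _ _] := Hact. by rewrite /d1 mu1 !gmul1g epi1 a1 subrr add0r. Qed.

Lemma Z2_cob {P0 : group} {Pi : pimod P0} {E : xext Pi} {V : zmodType}
  {act : P0 -> V -> V} (Hact : is_modact act) (b : C2 E V) (c : C1 E V)
  (Hb : forall m h g, b m h g = d1 act c m h g) : Z2 act b.
Proof. move=> p n k m h g. rewrite /d2 !Hb. exact: (d2d1 Hact c p n k m h g). Qed.

Lemma zero_B2st {P0 : group} {Pi : pimod P0} {E : xext Pi} {V : zmodType}
  {act : P0 -> V -> V} (Hact : is_modact act) (S : sections E) (z : C2 E V)
  (H0 : forall m h g, z m h g = 0) : B2st act S z.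
Proof.
split.
  exists (fun _ => 0); split => // m h g.
  by rewrite H0 /d1 /= (act0 _ Hact) subrr add0r.
move=> m h g; by rewrite /std /d1 /sigma !H0 (act0 _ Hact) ?subrr ?add0r ?subr0 ?oppr0.
Qed.

Theorem corollary4p5 (P0 : group) (Pi : pimod P0) (E : xext Pi)
  (V : zmodType) (act : P0 -> V -> V) (Hact : is_modact act)
  (S : sections E) :
  (* (a) *)
  (forall z : C2 E V, Z2pt act z ->
     (forall m : ME E, std act S z (s1 S (mu E m)) gone gone = 0) /\
     (forall g : GE E, std act S z gone (gcorr S g) (s0 S (epi E g)) = 0)) /\
  (* (b) *)
  (forall z : C2 E V, Z2st act S z <->
     [/\ Z2pt act z,
         forall m : ME E, z (s1 S (mu E m)) gone gone = 0
       & forall g : GE E, z gone (gcorr S g) (s0 S (epi E g)) = 0]) /\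
  (forall z : C2 E V, Z2pt act z -> Z2st act S (std act S z)) /\
  (* (c) H^2_st <-> H^2_pt : inclusion and z |-> z^std are well-defined
     homomorphisms on cocycles/coboundaries, and mutually inverse on classes *)
  (forall z : C2 E V, Z2st act S z -> Z2pt act z) /\
  (forall b : C2 E V, B2st act S b -> B2pt act b) /\
  (forall b : C2 E V, B2pt act b -> B2st act S (std act S b)) /\
  (forall z z' : C2 E V, forall m h g,
     std act S (addC2 z z') m h g = addC2 (std act S z) (std act S z') m h g) /\
  (forall z : C2 E V, Z2st act S z -> B2st act S (subC2 (std act S z) z)) /\
  (forall z : C2 E V, Z2pt act z -> B2pt act (subC2 (std act S z) z)) /\
  (* in particular H^2 <-> H^2_st, via the inclusion Z2st -> Z2 *)
  (forall z : C2 E V, Z2st act S z -> Z2 act z) /\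
  (forall b : C2 E V, B2st act S b -> B2 act b) /\
  (forall z : C2 E V, Z2st act S z -> B2 act z -> B2st act S z) /\
  (forall z : C2 E V, Z2 act z ->
     exists z' : C2 E V, Z2st act S z' /\ B2 act (subC2 z z')).
Proof.
have [a1 aM aD] := Hact.
split.
  move=> z [Hz Hp]; split => [m|g]; [exact: partA1 | exact: partA2].
split.
  move=> z; split.
  - case=> [[Hz Hp] Hs]; split => //.
    + move=> m; rewrite -(Hs (s1 S (mu E m)) gone gone); exact: partA1.
    + move=> g; rewrite -(Hs gone (gcorr S g) (s0 S (epi E g))); exact: partA2.
  - case=> [[Hz Hp] HM HG]; split; first by split.
    exact: std_of.
split.
  move=> z [Hz Hp]; exact: Z2st_std.
split; first by move=> z [].
split; first by move=> b [].
split.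
  move=> b [c [Hc Hb]].
  have Hzb : Z2 act b := Z2_cob Hact b c Hb.
  have Hpb : b gone gone gone = 0 by rewrite Hb (d1_111 Hact) Hc.
  split; last by case: (Z2st_std Hact S b Hzb Hpb).
  exists (fun x => c x - sigma S b x); split.
    by rewrite /pointed1 /= Hc (sig_epi1 S b _ epi1) s1_1 Hpb subrr.
  move=> m h g; by rewrite (d1_sub Hact c (sigma S b)) /std Hb.
split.
  move=> z z' m h g; rewrite /std.
  have -> : d1 act (sigma S (addC2 z z')) m h g
            = d1 act (sigma S z) m h g + d1 act (sigma S z') m h g
    by exact: (d1_add Hact (sigma S z) (sigma S z')).
  rewrite /addC2 /std; exact: zid4.
split.
  move=> z [_ Hs]; apply: zero_B2st => // m h g; by rewrite /subC2 Hs subrr.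
split.
  move=> z [Hz Hp]; exists (fun x => - sigma S z x); split.
    by rewrite /pointed1 /= (sig_epi1 S z _ epi1) s1_1 Hp oppr0.
  move=> m h g; rewrite (d1_opp Hact (sigma S z)) /subC2 /std.
  by rewrite addrAC subrr add0r.
split; first by move=> z [[Hz _] _].
split; first by move=> b [[c [_ Hc]] _]; exists c.
split.
  move=> z [[Hz Hp] Hs] [c Hc]; split => //; exists c; split => //.
  by rewrite /pointed1 -(d1_111 Hact c) -Hc.
move=> z Hz.
pose c0 : C1 E V := fun _ => z gone gone gone.
pose z0 : C2 E V := fun m h g => z m h g - d1 act c0 m h g.
have Hz0 : Z2 act z0.
  move=> p n k m h g.
  by rewrite /z0 (d2_sub Hact z (d1 act c0)) (Hz p n k m h g) (d2d1 Hact) subrr.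
have Hp0 : z0 gone gone gone = 0 by rewrite /z0 (d1_111 Hact c0) /c0 subrr.
exists (std act S z0); split; first exact: Z2st_std.
exists (fun x => c0 x + sigma S z0 x) => m h g.
rewrite (d1_add Hact c0 (sigma S z0)) /subC2 /std /z0; exact: zid9.
Qed.
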